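(* Let $k\ge 2$ and let $p_1,\dots,p_k\ge 2$ be integers. If $W=C_{p_k}\wr C_{p_{k-1}}\wr\cdots\wr C_{p_1}$, then $cw(W)=1$.
   Context: $C_p$ denotes the cyclic group of order $p$ acting on $\{1,\dots,p\}$ by the shift $(1,2,\dots,p)$; $\wr$ denotes the permutational wreath product ($H\wr G=H^X\rtimes G$ for $G$ acting on $X$), which is associative. The commutator width $cw(G)$ is the maximum, over elements $g$ of the derived subgroup $G'$, of the least number of commutators whose product is $g$. *)

(* Defs.v *)
From mathcomp Require Import all_boot all_fingroup.
Set Implicit Arguments. Unset Strict Implicit. Unset Printing Implicit Defensive.
Local Open Scope group_scope.

(* Leaves of the rooted tree with branching p 0, p 1, ..., p (k-1):
   level i (i < k) has alphabet Z/(p i).  Level 0 is the root level,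
   carrying the top group C_{p_1} (so p i here is p_{i+1} of the paper). *)
Definition leaf (k : nat) (p : nat -> nat) : finType :=
  {dffun forall i : 'I_k, 'I_(p i)}.

(* The permutational iterated wreath product
   C_{p k-1} wr ... wr C_{p 0}, realized (as usual) as the group of
   permutations s of the leaves such that on coordinate i, s adds
   (mod p i) a shift depending only on the prefix x_0 .. x_{i-1}:
   (s x)_i = x_i + a_i(x_0,...,x_{i-1})  (mod p i). *)
Definition wreath_set (k : nat) (p : nat -> nat) : {set {perm leaf k p}} :=
  [set s : {perm leaf k p} | [forall x : leaf k p, [forall y : leaf k p,
     [forall i : 'I_k,
       [forall j : 'I_k, (j < i)%N ==> (x j == y j)] ==>
       (s x i + y i == s y i + x i %[mod p i])%N]]]].

Definition iterated_wreath (k : nat) (p : nat -> nat) : {group {perm leaf k p}} :=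
  <<wreath_set k p>>%G.

Definition prod_of_comms (gT : finGroupType) (G : {set gT}) (m : nat) (g : gT)
  : Prop :=
  exists s : seq (gT * gT),
    [/\ size s = m, all (fun xy => (xy.1 \in G) && (xy.2 \in G)) s &
        g = \prod_(xy <- s) [~ xy.1, xy.2]].

Definition commutator_width (gT : finGroupType) (G : {set gT}) (n : nat)
  : Prop :=
  (forall g, g \in [~: G, G] -> exists2 m, (m <= n)%N & prod_of_comms G m g) /\
  (exists2 g, g \in [~: G, G] &
     forall m, (m < n)%N -> ~ prod_of_comms G m g).

(* Main.v *)
Require Import Defs.
From mathcomp Require Import all_boot all_fingroup.
From mathcomp Require Import zify.
Set Implicit Arguments. Unset Strict Implicit. Unset Printing Implicit Defensive.
Local Open Scope group_scope.

Section Wr.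
Variables (k : nat) (p : nat -> nat).
Hypothesis hp : forall i, (i < k)%N -> (1 < p i)%N.
Local Notation L := (leaf k p).
Local Notation W := (wreath_set k p).

Definition agree (i : nat) (x y : L) := forall j : 'I_k, (j < i)%N -> x j = y j.

Lemma inWP (s : {perm L}) :
  reflect (forall x y (i : 'I_k), agree i x y -> (s x i + y i = s y i + x i %[mod p i])%N)
          (s \in W).
Proof.
rewrite inE; apply: (iffP forallP) => [H x y i Hxy | H x].
- move/forallP: (H x) => /(_ y) /forallP /(_ i) /implyP.
  move=> H1; apply/eqP; apply: H1; apply/forallP => j; apply/implyP => hj.
  by apply/eqP; apply: Hxy.
- apply/forallP => y; apply/forallP => i; apply/implyP => /forallP Hxy.
  apply/eqP; apply: H => j hj; exact/eqP/(implyP (Hxy j)).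
Qed.

Lemma W_agree s x y i : s \in W -> agree i x y -> agree i (s x) (s y).
Proof.
move=> /inWP sW Hxy j hj.
have := sW x y j (fun j' hj' => Hxy j' (ltn_trans hj' hj)).
rewrite (Hxy j hj) => /eqP; rewrite eqn_modDr !modn_small // => /eqP e.
exact: val_inj.
Qed.

Lemma group_W : group_set W.
Proof.
apply/andP; split.
- by apply/inWP => x y i _; rewrite !perm1 addnC.
- apply/subsetP => st /mulsgP[s t sW tW ->]. apply/inWP => x y i Hxy.
  rewrite !permM.
  have H1 := (inWP _ tW) (s x) (s y) i (W_agree sW Hxy).
  have H2 := (inWP _ sW) x y i Hxy.
  apply/eqP; rewrite -(eqn_modDr (s x i + s y i)).
  have -> : (t (s x) i + y i + (s x i + s y i) = (t (s x) i + s y i) + (s x i + y i))%N by lia.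
  have -> : (t (s y) i + x i + (s x i + s y i) = (t (s y) i + s x i) + (s y i + x i))%N by lia.
  by rewrite -modnDm H1 H2 modnDm.
Qed.

Canonical W_group := Group group_W.

Lemma genW : <<W>> = W.
Proof. exact: gen_set_id group_W. Qed.

Definition sh (s : {perm L}) (i : 'I_k) (x : L) := ((s x i + (p i - x i)) %% p i)%N.

Lemma sh_agree s x y (i : 'I_k) : s \in W -> agree i x y -> sh s i x = sh s i y.
Proof.
move=> /inWP sW Hxy; have H := sW x y i Hxy.
rewrite /sh; apply/eqP; rewrite -(eqn_modDr (x i + y i)).
have := ltn_ord (x i); have := ltn_ord (y i) => hy hx.
have -> : (s x i + (p i - x i) + (x i + y i) = (s x i + y i) + p i)%N by lia.
have -> : (s y i + (p i - y i) + (x i + y i) = (s y i + x i) + p i)%N by lia.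
by rewrite eqn_modDr; apply/eqP.
Qed.

Lemma sh_mul s t (i : 'I_k) x : sh (s * t) i x = ((sh t i (s x) + sh s i x) %% p i)%N.
Proof.
rewrite /sh permM modnDm.
have := ltn_ord (x i); have := ltn_ord (s x i) => h1 h2.
have -> : (t (s x) i + (p i - s x i) + (s x i + (p i - x i)) = (t (s x) i + (p i - x i)) + p i)%N by lia.
by rewrite modnDr.
Qed.

Lemma sh1 (i : 'I_k) x : sh 1 i x = 0%N.
Proof. rewrite /sh perm1; have := ltn_ord (x i) => h. by rewrite subnKC ?modnn // ltnW. Qed.


Lemma pos_ord n (a : 'I_n) : (0 < n)%N.
Proof. exact: leq_ltn_trans (leq0n a) (ltn_ord a). Qed.

Section Mk.
Variable f : 'I_k -> L -> nat.
Hypothesis hf : forall (i : 'I_k) x y, agree i x y -> f i x = f i y.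

Definition mkfun (x : L) : L :=
  [ffun i : 'I_k => Ordinal (ltn_pmod (x i + f i x) (pos_ord (x i)))].

Lemma mkfunE x i : (mkfun x i : nat) = ((x i + f i x) %% p i)%N.
Proof. by rewrite ffunE. Qed.

Lemma mkfun_inj : injective mkfun.
Proof.
move=> x y E.
have H : forall i, agree i x y.
  elim => [|i IH] j hj //.
  rewrite ltnS leq_eqVlt in hj; case/orP: hj => [/eqP ej | hj]; last exact: IH.
  have ag : agree j x y by rewrite ej.
  have := congr1 (fun z : L => (z j : nat)) E; rewrite /= !mkfunE (hf ag).
  move/eqP; rewrite eqn_modDr !modn_small // => /eqP e; exact: val_inj.
apply/ffunP => j; exact: H k j (ltn_ord j).
Qed.

Definition mkW := perm mkfun_inj.

Lemma mkWE x i : (mkW x i : nat) = ((x i + f i x) %% p i)%N.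
Proof. by rewrite permE mkfunE. Qed.

Lemma mkW_in : mkW \in W.
Proof.
apply/inWP => x y i Hxy; rewrite !mkWE !modnDml (hf Hxy).
congr (_ %% _)%N; lia.
Qed.

Lemma sh_mkW i x : sh mkW i x = (f i x %% p i)%N.
Proof.
rewrite /sh mkWE modnDml; have := ltn_ord (x i) => h.
have -> : (x i + f i x + (p i - x i) = f i x + p i)%N by lia.
by rewrite modnDr.
Qed.

End Mk.

Definition tz (i : 'I_k) (x : L) := [forall j : 'I_k, (i <= j)%N ==> ((x j : nat) == 0%N)].
Definition TZ i := [set x : L | tz i x].
Definition phi (s : {perm L}) (i : 'I_k) := ((\sum_(x in TZ i) sh s i x) %% p i)%N.

Definition ztail (i : 'I_k) (y : L) : L :=
  [ffun j : 'I_k => if (j < i)%N then y j else Ordinal (pos_ord (y j))].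

Lemma sum_shift s t i : s \in W -> t \in W ->
  (\sum_(x in TZ i) sh t i (s x) = \sum_(x in TZ i) sh t i x)%N.
Proof.
move=> sW tW.
pose h x := ztail i (s x).
have e1 : forall x, sh t i (s x) = sh t i (h x).
  move=> x; apply: sh_agree => // j hj; by rewrite /h ffunE hj.
have hinj : {in TZ i &, injective h}.
  move=> x y; rewrite !inE => /forallP tx /forallP ty E.
  have ag : agree i (s x) (s y).
    move=> j hj; have := congr1 (fun z : L => z j) E; by rewrite /h !ffunE hj.
  have ag2 := W_agree (groupVr sW) ag; rewrite !permK in ag2.
  apply/ffunP => j; case: (ltnP j i) => hj; first exact: ag2.
  apply: ord_inj; move: (implyP (tx j) hj) (implyP (ty j) hj) => /eqP -> /eqP -> //.
have himg : h @: TZ i = TZ i.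
  apply/eqP; rewrite eqEcard card_in_imset // leqnn andbT.
  apply/subsetP => _ /imsetP[x _ ->]; rewrite inE; apply/forallP => j; apply/implyP => hj.
  by rewrite /h ffunE ltnNge hj.
under eq_bigr do rewrite e1.
by rewrite -(big_imset (fun y => sh t i y) hinj) himg.
Qed.

Lemma phi_mul s t i : s \in W -> t \in W ->
  phi (s * t) i = ((phi s i + phi t i) %% p i)%N.
Proof.
move=> sW tW; rewrite /phi modnDm.
under eq_bigr do rewrite sh_mul.
rewrite modn_summ big_split /= sum_shift //.
by rewrite addnC.
Qed.


Lemma phi1 i : phi 1 i = 0%N.
Proof. rewrite /phi big1 ?mod0n // => x _; exact: sh1. Qed.

Definition K := [set s in W | [forall i, phi s i == 0%N]].

Lemma inKP s : reflect (s \in W /\ forall i, phi s i = 0%N) (s \in K).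
Proof.
rewrite /K in_set; apply: (iffP andP) => [[sW /forallP H] | [sW H]].
  by split => // i; apply/eqP.
by split => //; apply/forallP => i; apply/eqP.
Qed.

Lemma group_K : group_set K.
Proof.
apply/andP; split.
  by apply/inKP; split; [exact: group1 | exact: phi1].
apply/subsetP => st /mulsgP[s t /inKP[sW Hs] /inKP[tW Ht] ->].
apply/inKP; split; first exact: groupM.
by move=> i; rewrite phi_mul // Hs Ht mod0n.
Qed.

Canonical K_group := Group group_K.

Lemma phiV s i : s \in W -> ((phi s^-1 i + phi s i) %% p i = 0)%N.
Proof. move=> sW; by rewrite -phi_mul ?groupV // mulVg phi1. Qed.

Lemma comm_K x y : x \in W -> y \in W -> [~ x, y] \in K.
Proof.
move=> xW yW; apply/inKP; split; first by rewrite groupR.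
move=> i; have h1 := phiV i xW; have h2 := phiV i yW.
rewrite commgEl !phi_mul ?groupM ?groupV //.
move: (phi x^-1 i) (phi x i) (phi y^-1 i) (phi y i) h1 h2 => a b c d h1 h2.
rewrite !modnDmr addnA modnDmr.
have -> : (a + c + (b + d) = (a + b) + (c + d))%N by lia.
by rewrite -modnDm h1 h2 mod0n.
Qed.

Lemma der_K : [~: W, W] \subset K.
Proof.
rewrite /commutator gen_subG; apply/subsetP => _ /imset2P[x y xW yW ->].
exact: comm_K.
Qed.

Definition pz (i : 'I_k) (x : L) := [forall j : 'I_k, (j < i)%N ==> ((x j : nat) == 0%N)].

Definition rff (c : 'I_k -> nat) (i : 'I_k) (x : L) := if pz i x then c i else 0%N.

Lemma rff_agree c (i : 'I_k) x y : agree i x y -> rff c i x = rff c i y.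
Proof.
move=> H; rewrite /rff /pz; congr (if _ then _ else _).
apply: eq_forallb => j; case: (ltnP j i) => hj //=; by rewrite H.
Qed.

Definition rf c := mkW (@rff_agree c).

Definition z0 : L := [ffun j : 'I_k => Ordinal (ltnW (hp (ltn_ord j)))].

Lemma z0E j : (z0 j : nat) = 0%N.
Proof. by rewrite ffunE. Qed.

Lemma phi_rf c i : phi (rf c) i = (c i %% p i)%N.
Proof.
rewrite /phi (bigD1 z0); last by rewrite inE; apply/forallP => j; rewrite z0E implybT.
rewrite big1.
  rewrite /= addn0 sh_mkW /rff modn_mod; suff -> : pz i z0 by [].
  by apply/forallP => j; rewrite z0E implybT.
move=> x /andP[]; rewrite inE => /forallP tx nx.
rewrite sh_mkW /rff; case: ifP => [/forallP px | _]; last by rewrite mod0n.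
case/negP: nx; apply/eqP/ffunP => j; apply: ord_inj; rewrite z0E.
case: (ltnP j i) => hj; first exact/eqP/(implyP (px j)).
exact/eqP/(implyP (tx j)).
Qed.

Lemma rf_in c : rf c \in W.
Proof. exact: mkW_in. Qed.

Lemma K_bound : (#|K| * #|L| <= #|W|)%N.
Proof.
pose F (u : {perm L} * L) := u.1 * rf (fun i => (u.2 i : nat)).
have Finj : {in setX K [set: L] &, injective F}.
  move=> [g c] [g' c']; rewrite !in_setX !in_setT /= !andbT => /inKP[gW Hg] /inKP[g'W Hg'].
  rewrite /F /= => E.
  have ec : c = c'.
    apply/ffunP => i; apply: ord_inj.
    have := congr1 (fun s => phi s i) E; rewrite /= !phi_mul ?rf_in //.
    by rewrite Hg Hg' !phi_rf !add0n !modn_mod !modn_small.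
  subst c'; by rewrite (mulIg _ _ _ E).
rewrite -[#|L|]cardsT -cardsX -(card_in_imset Finj).
apply: subset_leq_card; apply/subsetP => u /imsetP[[g c] ]; rewrite in_setX in_setT /= andbT.
move=> /inKP[gW _] ->; by rewrite /F groupM ?rf_in.
Qed.


Definition P (i : nat) := (\prod_(j < i) p j)%N.

Lemma P_S i : P i.+1 = (P i * p i)%N.
Proof. by rewrite /P big_ord_recr. Qed.

Lemma P0 : P 0 = 1%N.
Proof. by rewrite /P big_ord0. Qed.

Lemma P_pos i : (i <= k)%N -> (0 < P i)%N.
Proof.
elim: i => [|i IH] hi; first by rewrite P0.
rewrite P_S muln_gt0 IH ?(ltnW hi) //=; exact: ltnW (hp hi).
Qed.

Definition vl (i : nat) (x : L) := (\sum_(j < k | (j < i)%N) x j * P j)%N.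

Lemma vl0 x : vl 0 x = 0%N.
Proof. by rewrite /vl big1 // => j; rewrite ltn0. Qed.

Lemma vl_S i x (hi : (i < k)%N) : vl i.+1 x = (vl i x + x (Ordinal hi) * P i)%N.
Proof.
rewrite /vl (bigD1 (Ordinal hi)) //= addnC; congr (_ + _)%N.
by apply: eq_bigl => j; rewrite ltnS ltn_neqAle andbC.
Qed.

Lemma vl_lt i x : (i <= k)%N -> (vl i x < P i)%N.
Proof.
elim: i => [|i IH] hi; first by rewrite vl0 P0.
rewrite vl_S P_S; have := IH (ltnW hi); have := ltn_ord (x (Ordinal hi)) => /= h1 h2.
have h3 : ((x (Ordinal hi)).+1 * P i <= p i * P i)%N by rewrite leq_mul2r h1 orbT.
rewrite mulnC; nia.
Qed.

Lemma vl_agree i x y : agree i x y -> vl i x = vl i y.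
Proof. by move=> H; apply: eq_bigr => j hj; rewrite (H j hj). Qed.

Definition odo (i : 'I_k) (x : L) : nat := ((vl i x).+1 == P i).

Lemma odo_agree (i : 'I_k) x y : agree i x y -> odo i x = odo i y.
Proof. by move=> H; rewrite /odo (vl_agree H). Qed.

Definition tau := mkW odo_agree.

Lemma vl_tau i x : (i <= k)%N -> vl i (tau x) = ((vl i x).+1 %% P i)%N.
Proof.
elim: i => [|i IH] hi; first by rewrite !vl0 P0 modn1.
rewrite !vl_S (IH (ltnW hi)) mkWE P_S /odo /=.
have vlt := vl_lt x (ltnW hi); have alt := ltn_ord (x (Ordinal hi)).
have Ppos := P_pos (ltnW hi).
move: vlt alt Ppos; rewrite /=.
move: (vl i x) (x (Ordinal hi) : nat) (P i) => v a Q vlt alt Ppos.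
case: eqP => [e | ne] /=.
- rewrite e modnn add0n.
  have -> : (v + a * Q).+1 = ((a + 1) * Q)%N by rewrite -e; nia.
  by rewrite muln_modl [(Q * p i)%N]mulnC.
- have vlt2 : (v.+1 < Q)%N by rewrite ltn_neqAle vlt andbT; apply/eqP.
  rewrite addn0 !modn_small //.
  have h3 : (a.+1 * Q <= p i * Q)%N by rewrite leq_mul2r alt orbT.
  rewrite mulnC; nia.
Qed.

Lemma vl_inj x y : vl k x = vl k y -> x = y.
Proof.
suff H : forall i, (i <= k)%N -> vl i x = vl i y -> agree i x y.
  by move=> E; apply/ffunP => j; apply: (H k (leqnn k) E j (ltn_ord j)).
elim => [|i IH] hi E j hj //.
move: E; rewrite !vl_S.
have Ppos := P_pos (ltnW hi).
have vx := vl_lt x (ltnW hi); have vy := vl_lt y (ltnW hi).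
move=> E.
have ea : (x (Ordinal hi) : nat) = y (Ordinal hi).
  have := congr1 (fun n => n %/ P i)%N E.
  by rewrite /= ![(vl i _ + _)%N]addnC !divnMDl // !divn_small // !addn0.
have ev : vl i x = vl i y.
  have := congr1 (fun n => n %% P i)%N E.
  by rewrite /= ![(vl i _ + _)%N]addnC !modnMDl !modn_small.
rewrite ltnS leq_eqVlt in hj; case/orP: hj => [/eqP ej | hj]; last first.
  exact: IH (ltnW hi) ev j hj.
have -> : j = Ordinal hi by apply: val_inj.
exact: ord_inj.
Qed.

Lemma vl_taun n x : vl k ((tau ^+ n) x) = ((vl k x + n) %% P k)%N.
Proof.
elim: n => [|n IH]; first by rewrite expg0 perm1 addn0 modn_small // vl_lt.
by rewrite expgSr permM vl_tau // IH -addn1 modnDml addn1 addnS.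
Qed.

Lemma tau_trans w : exists n, (tau ^+ n) z0 = w.
Proof.
exists (vl k w + (P k - vl k z0))%N; apply: vl_inj; rewrite vl_taun.
have h1 := vl_lt z0 (leqnn k); have h2 := vl_lt w (leqnn k).
have -> : (vl k z0 + (vl k w + (P k - vl k z0)) = vl k w + P k)%N by lia.
by rewrite modnDr modn_small.
Qed.

Lemma tau_in : tau \in W.
Proof. exact: mkW_in. Qed.

Lemma cent_tau (c : {perm L}) : commute c tau -> c z0 = z0 -> c = 1.
Proof.
move=> cc cz; apply/permP => w; rewrite perm1.
have [n <-] := tau_trans w.
by rewrite -permM -(commuteX n cc) permM cz.
Qed.


Lemma der_comm g : g \in [~: W, W] -> exists2 x, x \in W & g = [~ x, tau].
Proof.
pose I := [set [~ x, tau] | x in W].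
have IW : I \subset [~: W, W].
  by apply/subsetP => u /imsetP[x xW ->]; apply: mem_commg => //; exact: tau_in.
pose F (x : {perm L}) := ([~ x, tau], x z0).
have Finj : {in W &, injective F}.
  move=> x y xW yW [E Ez].
  have E2 : x ^ tau = x * y^-1 * y ^ tau.
    by rewrite -mulgA -[y^-1 * _]/([~ y, tau]) -E /commg mulgA mulgV mul1g.
  have cc : commute (y * x^-1) tau.
    apply/commgP; rewrite -conjg_fix; apply/eqP.
    by rewrite conjMg conjVg E2 invMg mulgA mulgV mul1g invMg invgK.
  have cz : (y * x^-1) z0 = z0 by rewrite permM -Ez permK.
  have := cent_tau cc cz; move/eqP; rewrite divg_eq1 => /eqP ->; done.
have h1 : (#|W| <= #|I| * #|L|)%N.
  rewrite -[#|L|]cardsT -cardsX -(card_in_imset Finj).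
  apply: subset_leq_card; apply/subsetP => u /imsetP[x xW ->].
  by rewrite in_setX in_setT andbT /F /=; apply: imset_f.
have h2 := K_bound.
have h3 : (#|[~: W, W]| <= #|K|)%N by apply: subset_leq_card; exact: der_K.
have Lpos : (0 < #|L|)%N by apply/card_gt0P; exists z0.
have h4 : (#|[~: W, W]| <= #|I|)%N.
  rewrite -(leq_pmul2r Lpos); apply: leq_trans h1.
  apply: leq_trans h2; by rewrite leq_mul2r h3 orbT.
have eI : I = [~: W, W] by apply/eqP; rewrite eqEcard IW h4.
by rewrite -eI => /imsetP[x xW ->]; exists x.
Qed.

End Wr.

Theorem mainTheorem6 (k : nat) (p : nat -> nat) :
  (2 <= k)%N -> (forall i, (i < k)%N -> (2 <= p i)%N) ->
  commutator_width (iterated_wreath k p) 1.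
Proof.
move=> hk hp.
have eW : (iterated_wreath k p : {set _}) = wreath_set k p := genW k p.
rewrite /commutator_width eW; split.
  move=> g /(der_comm hp) [x xW ->]; exists 1%N => //.
  exists [:: (x, tau k p)]; split => //=; first by rewrite xW tau_in.
  by rewrite big_seq1.
pose i0 : 'I_k := Ordinal (ltnW hk).
pose i1 : 'I_k := Ordinal hk.
pose x1 := rf p (fun i : 'I_k => ((i : nat) == 0%N) : nat).
pose y1 := rf p (fun i : 'I_k => ((i : nat) == 1%N) : nat).
have pzz : forall i, pz i (z0 hp).
  by move=> i; apply/forallP => j; rewrite z0E implybT.
have e0 : (x1 (z0 hp) i0 : nat) = 1%N.
  rewrite /x1 /rf mkWE z0E /rff pzz /= modn_small //; exact: hp _ (ltnW hk).
have c1 : (x1 * y1) (z0 hp) i1 = 0%N :> nat.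
  rewrite permM mkWE mkWE z0E /rff pzz /= mod0n add0n.
  have -> : pz i1 (x1 (z0 hp)) = false.
    by apply/negP => /forallP /(_ i0) /=; rewrite e0.
  by rewrite mod0n.
have c2 : (y1 * x1) (z0 hp) i1 = 1%N :> nat.
  rewrite permM mkWE mkWE z0E /rff pzz /= add0n.
  case: (pz _ _); rewrite /= !addn0 !modn_small //; exact: hp _ hk.
exists [~ x1, y1]; first by apply: mem_commg; apply: rf_in.
move=> m; rewrite ltnS leqn0 => /eqP -> [s [/size0nil -> _]].
rewrite big_nil => /eqP /commgP cx.
by move: c1; rewrite cx c2.
Qed.
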